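(* Let $H=\sum_{i,j=1}^n\left(\tfrac12\mu_{ij}p_ip_j+\tfrac12\kappa_{ij}q_iq_j+\tfrac12\gamma_{ij}p_iq_j+\tfrac12\gamma_{ji}q_ip_j\right)$ with $\mu,\kappa$ real symmetric, $\gamma$ real, and Hermitian $p_i,q_i$ satisfying $[p_i,q_j]=-i\delta_{ij}$, $[p_i,p_j]=[q_i,q_j]=0$. If $H$ is Dirac diagonalizable, then its dynamic matrix $D=\Sigma_yM$ is physically diagonalizable.
   Context: $M=\begin{pmatrix}\mu&\gamma\\ \gamma^T&\kappa\end{pmatrix}$, $\Sigma_y=\begin{pmatrix}0&-iI_n\\ iI_n&0\end{pmatrix}$. $H$ is Dirac diagonalizable if there exist operators $d_1,\dots,d_n$, each a complex linear combination of the $p_i,q_i$, with $[d_i,d_j^\dagger]=\delta_{ij}$, $[d_i,d_j]=0$, and real $\omega_1,\dots,\omega_n,C$ with $H=\sum_i\omega_id_i^\dagger d_i+C$. A matrix is physically diagonalizable if it is diagonalizable over $\mathbb{C}$ and all its eigenvalues are real. *)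

(* Defs.v *)
From HB Require Import structures.
From mathcomp Require Import all_boot all_order all_algebra.
Set Implicit Arguments. Unset Strict Implicit. Unset Printing Implicit Defensive.
Import Order.TTheory GRing.Theory Num.Theory.
Local Open Scope ring_scope.

(* Abstract setting: a (nontrivial, unital) complex *-algebra A in which the
   p_i, q_i live.  C is any numeric algebraically closed field (e.g. algC or
   complex R), with complex conjugation Num.conj , written x^* . *)

Definition is_star (C : numClosedFieldType) (A : algType C) (star : A -> A) :=
  [/\ forall x y, star (x + y) = star x + star y,
      forall (a : C) x, star (a *: x) = a^* *: star x,
      forall x y, star (x * y) = star y * star x
    & forall x, star (star x) = x].

Definition comm (C : numClosedFieldType) (A : algType C) (x y : A) : A :=
  x * y - y * x.

Definition CCR (C : numClosedFieldType) (A : algType C) (star : A -> A)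
  (n : nat) (p q : 'I_n -> A) :=
  [/\ forall i, star (p i) = p i,
      forall i, star (q i) = q i,
      forall i j, comm (p i) (q j) = (- 'i) *: (i == j)%:R,
      forall i j, comm (p i) (p j) = 0
    & forall i j, comm (q i) (q j) = 0].

Definition hamiltonian (C : numClosedFieldType) (A : algType C) (n : nat)
  (mu kappa gamma : 'M[C]_n) (p q : 'I_n -> A) : A :=
  \sum_(i < n) \sum_(j < n)
     ((2^-1 * mu i j) *: (p i * p j) + (2^-1 * kappa i j) *: (q i * q j)
      + (2^-1 * gamma i j) *: (p i * q j) + (2^-1 * gamma j i) *: (q i * p j)).

Definition real_mx (C : numClosedFieldType) (m n : nat) (X : 'M[C]_(m, n)) :=
  forall i j, X i j \is Num.real.

Definition dirac_diagonalizable (C : numClosedFieldType) (A : algType C)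
  (star : A -> A) (n : nat) (p q : 'I_n -> A) (H : A) :=
  exists (a b : 'M[C]_n) (omega : 'I_n -> C) (c : C),
    let d := fun i => \sum_(k < n) (a i k *: p k + b i k *: q k) in
    [/\ forall i, omega i \is Num.real,
        c \is Num.real,
        forall i j, comm (d i) (star (d j)) = (i == j)%:R,
        forall i j, comm (d i) (d j) = 0
      & H = \sum_(i < n) omega i *: (star (d i) * d i) + c *: 1].

Definition Mmat (C : numClosedFieldType) (n : nat) (mu kappa gamma : 'M[C]_n)
  : 'M[C]_(n + n) := block_mx mu gamma gamma^T kappa.

Definition Sigma_y (C : numClosedFieldType) (n : nat) : 'M[C]_(n + n) :=
  block_mx 0 ((- 'i) %:M) ('i %:M) 0.

Definition dynamic_matrix (C : numClosedFieldType) (n : nat)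
  (mu kappa gamma : 'M[C]_n) : 'M[C]_(n + n) :=
  Sigma_y C n *m Mmat mu kappa gamma.

Definition physically_diagonalizable (C : numClosedFieldType) (m : nat)
  (X : 'M[C]_m) :=
  diagonalizable X /\ (forall z : C, eigenvalue X z -> z \is Num.real).

(* Main.v *)
Require Import Defs.
From HB Require Import structures.
From mathcomp Require Import all_boot all_order all_algebra.
From mathcomp Require Import ring.
Import Order.TTheory GRing.Theory Num.Theory.
Set Implicit Arguments. Unset Strict Implicit. Unset Printing Implicit Defensive.
Local Open Scope ring_scope.

Lemma comm_suml (C : numClosedFieldType) (A : algType C) m (f : 'I_m -> A) y :
  comm (\sum_(i < m) f i) y = \sum_(i < m) comm (f i) y.
Proof. by rewrite /comm mulr_suml mulr_sumr -sumrB. Qed.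

Lemma comm_sumr (C : numClosedFieldType) (A : algType C) m (f : 'I_m -> A) y :
  comm y (\sum_(i < m) f i) = \sum_(i < m) comm y (f i).
Proof. by rewrite /comm mulr_suml mulr_sumr -sumrB. Qed.

Lemma commZl (C : numClosedFieldType) (A : algType C) (a : C) (x y : A) :
  comm (a *: x) y = a *: comm x y.
Proof. by rewrite /comm -scalerAl -scalerAr scalerBr. Qed.

Lemma commZr (C : numClosedFieldType) (A : algType C) (a : C) (x y : A) :
  comm x (a *: y) = a *: comm x y.
Proof. by rewrite /comm -scalerAl -scalerAr scalerBr. Qed.

Lemma commMl (C : numClosedFieldType) (A : algType C) (x y z : A) :
  comm (x * y) z = x * comm y z + comm x z * y.
Proof. by rewrite /comm mulrBr mulrBl !mulrA addrA subrK. Qed.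

Lemma commN (C : numClosedFieldType) (A : algType C) (x y : A) :
  comm x y = - comm y x.
Proof. by rewrite /comm opprB. Qed.

Lemma comm1l (C : numClosedFieldType) (A : algType C) (x : A) : comm 1 x = 0.
Proof. by rewrite /comm mul1r mulr1 subrr. Qed.

Lemma comm0l (C : numClosedFieldType) (A : algType C) (x : A) : comm 0 x = 0.
Proof. by rewrite /comm mul0r mulr0 subrr. Qed.

Lemma scale1_inj (C : numClosedFieldType) (A : algType C) (c : C) :
  c *: (1 : A) = 0 -> c = 0.
Proof.
move=> h; apply/eqP; apply/negPn/negP => cn0.
have : (1 : A) = 0 by rewrite -[1 : A]scale1r -(mulVf cn0) -scalerA h scaler0.
by move/eqP; rewrite oner_eq0.
Qed.

Definition Rv (C : numClosedFieldType) (A : algType C) n (p q : 'I_n -> A)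
  (k : 'I_(n + n)) : A :=
  match split k with inl i => p i | inr i => q i end.

Lemma Rv_unsplit (C : numClosedFieldType) (A : algType C) n (p q : 'I_n -> A) s :
  Rv p q (unsplit s) = match s with inl i => p i | inr i => q i end.
Proof. by rewrite /Rv unsplitK. Qed.

Lemma Rv_comm (C : numClosedFieldType) (A : algType C) (star : A -> A) n
  (p q : 'I_n -> A) : CCR star p q ->
  forall a b, comm (Rv p q a) (Rv p q b) = Sigma_y C n a b *: 1.
Proof.
case=> _ _ hpq hpp hqq a b.
rewrite -(splitK a) -(splitK b) !Rv_unsplit.
case: (split a) => i; case: (split b) => j /=.
- by rewrite block_mxEul mxE hpp scale0r.
- rewrite block_mxEur mxE hpq; case: eqP => _; by rewrite ?scale1r ?scaler0 ?scale0r.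
- rewrite block_mxEdl mxE commN hpq eq_sym; case: eqP => _;
    by rewrite ?scale1r ?scaler0 ?scale0r ?scaleNr ?opprK ?oppr0.
- by rewrite block_mxEdr mxE hqq scale0r.
Qed.

Definition lin (C : numClosedFieldType) (A : algType C) n (p q : 'I_n -> A)
  (u : 'rV[C]_(n + n)) : A := \sum_k u 0 k *: Rv p q k.

Lemma linD (C : numClosedFieldType) (A : algType C) n (p q : 'I_n -> A) u v :
  lin p q (u + v) = lin p q u + lin p q v.
Proof. by rewrite /lin -big_split; apply: eq_bigr => k _; rewrite mxE scalerDl. Qed.

Lemma linN (C : numClosedFieldType) (A : algType C) n (p q : 'I_n -> A) u :
  lin p q (- u) = - lin p q u.
Proof. by rewrite /lin -sumrN; apply: eq_bigr => k _; rewrite mxE scaleNr. Qed.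

Lemma linZ (C : numClosedFieldType) (A : algType C) n (p q : 'I_n -> A) a u :
  lin p q (a *: u) = a *: lin p q u.
Proof. by rewrite /lin scaler_sumr; apply: eq_bigr => k _; rewrite mxE scalerA. Qed.

Lemma lin_comm (C : numClosedFieldType) (A : algType C) (star : A -> A) n
  (p q : 'I_n -> A) : CCR star p q -> forall u w,
  comm (lin p q u) (lin p q w) = (u *m Sigma_y C n *m w^T) 0 0 *: 1.
Proof.
move=> hc u w; rewrite /lin comm_suml.
rewrite !mxE scaler_suml.
under [RHS]eq_bigr do rewrite !mxE mulr_suml scaler_suml.
rewrite exchange_big; apply: eq_bigr => a _.
rewrite commZl comm_sumr scaler_sumr; apply: eq_bigr => b _.
rewrite commZr (Rv_comm hc) !scalerA !mxE; congr (_ *: _); ring.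
Qed.

Lemma SyS (C : numClosedFieldType) n : Sigma_y C n *m Sigma_y C n = 1%:M.
Proof.
rewrite /Sigma_y mulmx_block !mulmx0 !mul0mx !addr0 !add0r -!scalar_mxM.
rewrite scalar_mx_block; congr block_mx; congr (_%:M).
- by rewrite mulNr -expr2 sqrCi opprK.
- by rewrite mulrN -expr2 sqrCi opprK.
Qed.

Lemma lin_inj (C : numClosedFieldType) (A : algType C) (star : A -> A) n
  (p q : 'I_n -> A) : CCR star p q -> forall u v, lin p q u = lin p q v -> u = v.
Proof.
move=> hc u v e; apply/eqP; rewrite -subr_eq0; apply/eqP.
have h0 : lin p q (u - v) = 0 by rewrite linD linN e subrr.
suff hJ : (u - v) *m Sigma_y C n = 0.
  by rewrite -[u - v]mulmx1 -SyS mulmxA hJ mul0mx.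
apply/matrixP => i k; rewrite (ord1 i) [RHS]mxE.
have := lin_comm hc (u - v) (delta_mx 0 k).
rewrite h0 comm0l => /esym/scale1_inj.
by rewrite trmx_delta -colE mxE.
Qed.

Lemma star_lin (C : numClosedFieldType) (A : algType C) (star : A -> A) n
  (p q : 'I_n -> A) : is_star star -> CCR star p q -> forall u,
  star (lin p q u) = lin p q (map_mx Num.conj u).
Proof.
case=> hD hZ _ _ [hp hq _ _ _] u.
have h0 : star 0 = 0.
  by apply: (addrI (star 0)); rewrite -hD !addr0.
rewrite /lin (big_morph star hD h0); apply: eq_bigr => k _.
rewrite hZ mxE; congr (_ *: _).
rewrite -(splitK k) !Rv_unsplit; case: (split k) => i; [exact: hp | exact: hq].
Qed.

Lemma quad_comm (C : numClosedFieldType) (A : algType C) m (R : 'I_m -> A)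
  (M J : 'M[C]_m) : M^T = M -> (forall a b, comm (R a) (R b) = J a b *: 1) ->
  forall c, comm (\sum_a \sum_b (2^-1 * M a b) *: (R a * R b)) (R c)
            = \sum_a (M *m J) a c *: R a.
Proof.
move=> hM hR c.
transitivity (\sum_a \sum_b ((2^-1 * M a b * J b c) *: R a
                             + (2^-1 * M a b * J a c) *: R b)).
  rewrite comm_suml; apply: eq_bigr => a _; rewrite comm_suml.
  apply: eq_bigr => b _.
  rewrite commZl commMl !hR -scalerAr mulr1 -scalerAl mul1r scalerDr !scalerA.
  by [].
under eq_bigr do rewrite big_split.
rewrite big_split /= [X in _ + X]exchange_big /= -big_split.
apply: eq_bigr => a _; rewrite -big_split mxE scaler_suml /=.
apply: eq_bigr => b _; rewrite -scalerDl; congr (_ *: _).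
have -> : M b a = M a b by rewrite -{1}hM mxE.
by field.
Qed.

Lemma Rv_l (C : numClosedFieldType) (A : algType C) n (p q : 'I_n -> A) i :
  Rv p q (lshift n i) = p i.
Proof. exact: (Rv_unsplit p q (inl i)). Qed.

Lemma Rv_r (C : numClosedFieldType) (A : algType C) n (p q : 'I_n -> A) i :
  Rv p q (rshift n i) = q i.
Proof. exact: (Rv_unsplit p q (inr i)). Qed.

Lemma ham_eq (C : numClosedFieldType) (A : algType C) n
  (mu kappa gamma : 'M[C]_n) (p q : 'I_n -> A) :
  hamiltonian mu kappa gamma p q =
  \sum_a \sum_b (2^-1 * Mmat mu kappa gamma a b) *: (Rv p q a * Rv p q b).
Proof.
rewrite big_split_ord /=.
under eq_bigr do rewrite big_split_ord /=.
under [X in _ + X]eq_bigr do rewrite big_split_ord /=.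
rewrite /Mmat.
rewrite !big_split /=.
rewrite /hamiltonian.
under [LHS]eq_bigr do rewrite !big_split /=.
rewrite !big_split /=.
have re : forall (x y z w x' y' z' w' : A), x = x' -> y = w' -> z = y' -> w = z' ->
    x + y + z + w = x' + y' + (z' + w').
  by move=> x y z w x' y' z' w' -> -> -> ->; rewrite -!addrA; congr (_ + _); rewrite addrC -addrA.
apply: re; apply: eq_bigr => i _; apply: eq_bigr => j _.
- by rewrite block_mxEul !Rv_l.
- by rewrite block_mxEdr !Rv_r.
- by rewrite block_mxEur Rv_l Rv_r.
- by rewrite block_mxEdl Rv_l Rv_r mxE.
Qed.

Lemma Mmat_sym (C : numClosedFieldType) n (mu kappa gamma : 'M[C]_n) :
  mu^T = mu -> kappa^T = kappa -> (Mmat mu kappa gamma)^T = Mmat mu kappa gamma.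
Proof. by move=> hm hk; rewrite /Mmat tr_block_mx hm hk trmxK. Qed.

Lemma Sy_tr (C : numClosedFieldType) n : (Sigma_y C n)^T = - Sigma_y C n.
Proof.
rewrite /Sigma_y tr_block_mx opp_block_mx !tr_scalar_mx trmx0 oppr0.
have e : forall a : C, - (a%:M : 'M_n) = (-a)%:M.
  by move=> a; apply/matrixP=> i j; rewrite !mxE mulNrn.
by rewrite !e opprK.
Qed.

Lemma H_lin (C : numClosedFieldType) (A : algType C) (star : A -> A) n
  (mu kappa gamma : 'M[C]_n) (p q : 'I_n -> A) :
  mu^T = mu -> kappa^T = kappa -> CCR star p q -> forall u,
  comm (hamiltonian mu kappa gamma p q) (lin p q u)
  = lin p q (- (u *m dynamic_matrix mu kappa gamma)).
Proof.
move=> hm hk hc u.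
have hMJ : forall a c, (Mmat mu kappa gamma *m Sigma_y C n) a c
                       = - (dynamic_matrix mu kappa gamma) c a.
  move=> a c; have -> : (Mmat mu kappa gamma *m Sigma_y C n) a c
     = ((Mmat mu kappa gamma *m Sigma_y C n)^T c a) by rewrite [RHS]mxE.
  by rewrite trmx_mul Sy_tr Mmat_sym // mulNmx mxE.
rewrite ham_eq /lin comm_sumr.
under eq_bigr do rewrite commZr (quad_comm (Mmat_sym gamma hm hk) (Rv_comm hc)) scaler_sumr.
rewrite exchange_big; apply: eq_bigr => a _.
rewrite !mxE -sumrN scaler_suml; apply: eq_bigr => c _.
by rewrite scalerA hMJ mxE mulrN.
Qed.

Lemma commDl (C : numClosedFieldType) (A : algType C) (x y z : A) :
  comm (x + y) z = comm x z + comm y z.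
Proof. by rewrite /comm mulrDl mulrDr opprD addrACA. Qed.

Lemma d_lin (C : numClosedFieldType) (A : algType C) n (p q : 'I_n -> A)
  (a b : 'M[C]_n) i :
  \sum_(k < n) (a i k *: p k + b i k *: q k) = lin p q (row i (row_mx a b)).
Proof.
rewrite /lin big_split_ord big_split /=; congr (_ + _); apply: eq_bigr => k _.
  by rewrite mxE row_mxEl Rv_l.
by rewrite mxE row_mxEr Rv_r.
Qed.

Lemma rowprod (C : numClosedFieldType) m k l (X : 'M[C]_(m, k)) (J : 'M[C]_k)
  (Y : 'M[C]_(l, k)) i j :
  (row i X *m J *m (row j Y)^T) 0 0 = (X *m J *m Y^T) i j.
Proof.
rewrite -row_mul tr_row !mxE; apply: eq_bigr => r _; rewrite !mxE.
by [].
Qed.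

Lemma scale1_nat (C : numClosedFieldType) (A : algType C) (c : C) k :
  c *: (1 : A) = k%:R -> c = k%:R.
Proof.
move=> h; apply/eqP; rewrite -subr_eq0; apply/eqP; apply: (@scale1_inj C A).
by rewrite scalerBl h scaler_nat subrr.
Qed.

Lemma dirac_mx (C : numClosedFieldType) (A : algType C) (star : A -> A)
  (n : nat) (mu kappa gamma : 'M[C]_n) (p q : 'I_n -> A) :
  is_star star -> mu^T = mu -> kappa^T = kappa -> CCR star p q ->
  dirac_diagonalizable star p q (hamiltonian mu kappa gamma p q) ->
  exists (U : 'M[C]_(n, n + n)) (w : 'rV[C]_n),
    [/\ forall i, w 0 i \is Num.real,
        U *m Sigma_y C n *m (map_mx Num.conj U)^T = 1%:M,
        U *m Sigma_y C n *m U^T = 0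
      & U *m dynamic_matrix mu kappa gamma = diag_mx w *m U].
Proof.
move=> hs hm hk hc [a [b [om [c0 /= [hom _ hdd hd0 hH]]]]].
set U := row_mx a b.
have hd := d_lin p q a b.
have hdd' : forall i j, comm (lin p q (row i U)) (star (lin p q (row j U))) = (i == j)%:R.
  by move=> i j; rewrite -!hd; exact: hdd.
have hd0' : forall i j, comm (lin p q (row i U)) (lin p q (row j U)) = 0.
  by move=> i j; rewrite -!hd; exact: hd0.
have hH' : hamiltonian mu kappa gamma p q =
   \sum_i om i *: (star (lin p q (row i U)) * lin p q (row i U)) + c0 *: 1.
  by rewrite hH; congr (_ + _); apply: eq_bigr => i _; rewrite hd.
exists U, (\row_i om i); split.
- by move=> i; rewrite mxE.
- apply/matrixP => i j; have := hdd' i j.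
  rewrite (star_lin hs hc) (lin_comm hc) map_row rowprod => /scale1_nat ->.
  by rewrite mxE.
- apply/matrixP => i j; have := hd0' i j.
  rewrite (lin_comm hc) rowprod => h; rewrite (scale1_inj h).
  by rewrite mxE.
apply/row_matrixP => j; rewrite row_mul.
have -> : row j (diag_mx (\row_i om i) *m U) = om j *: row j U.
  by apply/rowP => k; rewrite !mxE (bigD1 j) //= big1 ?addr0 => [|i nij];
    rewrite !mxE ?eqxx ?mulr1n // eq_sym (negbTE nij) mulr0n mul0r.
apply: oppr_inj; apply: (lin_inj hc); rewrite -(H_lin gamma hm hk hc).
rewrite -scaleNr linZ hH' commDl commZl comm1l scaler0 addr0 comm_suml.
rewrite (bigD1 j) //= big1 ?addr0 => [|i nij].
  by rewrite commZl commMl hd0' mulr0 add0r commN hdd' eqxx mulN1r scalerN scaleNr.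
by rewrite commZl commMl hd0' mulr0 add0r commN hdd' eq_sym (negbTE nij) oppr0 mul0r scaler0.
Qed.

Lemma conjJ (C : numClosedFieldType) n :
  map_mx Num.conj (Sigma_y C n) = - Sigma_y C n.
Proof.
apply/matrixP=> a b; rewrite /Sigma_y -(splitK a) -(splitK b) [LHS]mxE [RHS]mxE.
case: (split a) => i; case: (split b) => j /=;
  rewrite ?block_mxEul ?block_mxEur ?block_mxEdl ?block_mxEdr ?mxE;
  try (case: eqP => _); rewrite ?mulr1n ?mulr0n ?conjC0 ?oppr0 ?rmorphN ?conjCi ?opprK; try done; apply/eqP; rewrite eqr_oppLR; apply/eqP; exact: conjCi.
Qed.

Lemma conjK_mx (C : numClosedFieldType) m k (X : 'M[C]_(m, k)) :
  map_mx Num.conj (map_mx Num.conj X) = X.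
Proof. by apply/matrixP => i j; rewrite !mxE conjCK. Qed.

Lemma final_mx (C : numClosedFieldType) n (M : 'M[C]_(n + n))
  (U : 'M[C]_(n, n + n)) (w : 'rV[C]_n) :
  (forall i, w 0 i \is Num.real) -> map_mx Num.conj M = M ->
  U *m Sigma_y C n *m (map_mx Num.conj U)^T = 1%:M ->
  U *m Sigma_y C n *m U^T = 0 ->
  U *m (Sigma_y C n *m M) = diag_mx w *m U ->
  physically_diagonalizable (Sigma_y C n *m M).
Proof.
move=> hw hM G1 G0 hUD.
set J := Sigma_y C n in G1 G0 hUD *.
set D := J *m M in hUD *.
set Ub := map_mx Num.conj U in G1 *.
have cD : map_mx Num.conj D = - D by rewrite map_mxM conjJ hM mulNmx.
have cw : map_mx Num.conj w = w.
  by apply/matrixP => i j; rewrite (ord1 i) mxE conj_Creal.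
have hUbD : Ub *m D = diag_mx (- w) *m Ub.
  have h : Ub *m map_mx Num.conj D = map_mx Num.conj (diag_mx w) *m Ub.
    by rewrite /Ub -!map_mxM hUD.
  rewrite cD map_diag_mx cw mulmxN in h.
  apply/matrixP => i j; have := congr1 (fun X : 'M[C]_(n, n + n) => X i j) h.
  rewrite /= !mul_diag_mx !mxE => h'.
  by rewrite -[LHS]opprK h' mulNr.
set P := col_mx U Ub.
set e := row_mx w (- w).
have hPD : P *m D = diag_mx e *m P.
  by rewrite /P /e mul_col_mx diag_mx_row mul_block_col !mul0mx addr0 add0r hUD hUbD.
have hUb2 : Ub *m J *m Ub^T = 0.
  have := congr1 (map_mx Num.conj) G0.
  by rewrite !map_mxM conjJ map_trmx map_mx0 mulmxN mulNmx => /eqP; rewrite oppr_eq0 => /eqP.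
have hUb1 : Ub *m J *m U^T = - 1%:M.
  have := congr1 (map_mx Num.conj) G1.
  rewrite !map_mxM conjJ map_trmx conjK_mx map_mx1 mulmxN mulNmx => <-.
  by rewrite opprK.
set S : 'M[C]_(n + n) := block_mx 1%:M 0 0 (- 1%:M).
have hPu : P \in unitmx.
  suff h : P *m (J *m (map_mx Num.conj P)^T *m S) = 1%:M by case: (mulmx1_unit h).
  rewrite !mulmxA /P map_col_mx conjK_mx tr_col_mx mul_col_mx mul_col_row.
  rewrite G1 G0 hUb2 hUb1 /S mulmx_block !mulmx0 !mul0mx !addr0 !add0r.
  by rewrite mulmx1 mulmxN mulmx1 opprK scalar_mx_block.
split.
  exists P => //; rewrite /similar_to conjumx // hPD mulmxK //.
move=> z /eigenvalueP [v hv vn0].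
set x := v *m invmx P.
have e1 : invmx P *m diag_mx e = D *m invmx P.
  by rewrite -[diag_mx e](mulmxK hPu) -hPD !mulmxA mulVmx // mul1mx.
have hx : x *m diag_mx e = z *: x by rewrite /x -mulmxA e1 mulmxA hv -scalemxAl.
have [k xk] : exists k, x 0 k != 0.
  case: (pickP (fun k => x 0 k != 0)) => [k hk|h]; first by exists k.
  exfalso; move/negP: vn0; apply; apply/eqP.
  have -> : v = x *m P by rewrite /x mulmxKV.
  have -> : x = 0.
    by apply/matrixP => i j; rewrite (ord1 i) [RHS]mxE; move/negbFE/eqP: (h j).
  by rewrite mul0mx.
have ek : e 0 k = z.
  have h1 : (x *m diag_mx e) 0 k = x 0 k * e 0 k by rewrite mul_mx_diag mxE.
  have h2 : (z *: x) 0 k = z * x 0 k by rewrite mxE.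
  have := congr1 (fun X : 'rV[C]_(n + n) => X 0 k) hx; rewrite /= h1 h2 [in RHS]mulrC.
  by move=> hh; apply: (mulfI xk).
rewrite -ek /e -(splitK k); case: (split k) => i /=.
  by rewrite row_mxEl.
by rewrite row_mxEr mxE realN.
Qed.

Lemma Mmat_real (C : numClosedFieldType) n (mu kappa gamma : 'M[C]_n) :
  real_mx mu -> real_mx kappa -> real_mx gamma ->
  map_mx Num.conj (Mmat mu kappa gamma) = Mmat mu kappa gamma.
Proof.
move=> hm hk hg; apply/matrixP => a b; rewrite [LHS]mxE; apply: conj_Creal.
rewrite /Mmat -(splitK a) -(splitK b).
case: (split a) => i; case: (split b) => j /=;
  rewrite ?block_mxEul ?block_mxEur ?block_mxEdl ?block_mxEdr ?mxE //.
Qed.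

Theorem proposition8 (C : numClosedFieldType) (A : algType C) (star : A -> A)
  (n : nat) (mu kappa gamma : 'M[C]_n) (p q : 'I_n -> A) :
  is_star star ->
  real_mx mu -> real_mx kappa -> real_mx gamma ->
  mu^T = mu -> kappa^T = kappa ->
  CCR star p q ->
  dirac_diagonalizable star p q (hamiltonian mu kappa gamma p q) ->
  physically_diagonalizable (dynamic_matrix mu kappa gamma).
Proof.
move=> hs hmr hkr hgr hm hk hc hdd.
have [U [w [hw G1 G0 hUD]]] := dirac_mx hs hm hk hc hdd.
exact: (@final_mx C n (Mmat mu kappa gamma) U w hw (Mmat_real hmr hkr hgr) G1 G0 hUD).
Qed.
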